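(* Let $D=D_1\cup D_2$ be the disjoint union of oriented virtual singular link diagrams $D_1$ and $D_2$ (with no crossings between $D_1$ and $D_2$). Then $R(D)=\phi(D)h+\psi(D)$ where $$\phi(D)=\phi(D_1)\psi(D_2)+\psi(D_1)\phi(D_2),\qquad \psi(D)=\phi(D_1)\phi(D_2)+\psi(D_1)\psi(D_2).$$
   Context: An oriented virtual singular link diagram is a generic immersion of finitely many oriented circles into $\mathbb{R}^2$ with finitely many transverse double points, each decorated as a classical crossing (with over/under information and the usual sign $\pm1$), a singular crossing, or a virtual crossing. At a classical or singular crossing, the oriented resolution replaces it by two disjoint arcs respecting orientation; the disoriented resolution replaces it by one arc joining the two incoming ends with a sink bivalent vertex and one arc joining the two outgoing ends with a source bivalent vertex. Virtual crossings are kept. A state $S$ of $D$ is a choice of resolution at every classical and singular crossing; it is a collection of immersed closed curves (all intersections virtual) with bivalent vertices, edge orientations alternating. $\|S\|$ = number of closed curves; $c(D)$ = number of classical crossings; $a(S)$ = #(negative classical crossings with oriented resolution) $-$ #(positive classical crossings with oriented resolution); $b(S)$ the same for disoriented resolutions; $\alpha(S),\beta(S)$ = numbers of singular crossings with oriented, resp. disoriented, resolution. An edge of $S$ is an arc between consecutive bivalent vertices (a closed curve without vertices is one edge); a weight map is $\tau:E(S)\to\{\pm1\}$ with different values on edges sharing a vertex; the parity $i(S)=\prod_v\tau(e_v)\tau(e_v')$ over all virtual crossings $v$, with $e_v,e_v'$ the edges meeting at $v$ (independent of $\tau$). With $\overline{R}(S)=A^{2a(S)+4b(S)}(-A^2-A^{-2})^{\alpha(S)+\|S\|}(-A^4-A^{-4})^{\beta(S)}$: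 $R(D)=(-1)^{c(D)}\sum_S\overline{R}(S)h^{\frac{1-i(S)}{2}}$, $\phi(D)=(-1)^{c(D)}\sum_{S:\,i(S)=-1}\overline{R}(S)$, $\psi(D)=(-1)^{c(D)}\sum_{S:\,i(S)=1}\overline{R}(S)$, so that $R(D)=\phi(D)h+\psi(D)$; the same definitions apply to $D_1$ and $D_2$. *)

(* Defs.v *)
From HB Require Import structures.
From mathcomp Require Import all_boot all_order all_algebra all_fingroup.
Set Implicit Arguments. Unset Strict Implicit. Unset Printing Implicit Defensive.
Import Order.TTheory GRing.Theory Num.Theory.

(* Decoration of a double point: classical crossing with its sign
   (true = positive, false = negative), singular crossing, virtual crossing. *)
Inductive ckind := Classical of bool | Singular | Virtual.

Definition is_virtual (k : ckind) := if k is Virtual then true else false.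
Definition is_classical (k : ckind) := if k is Classical _ then true else false.
Definition is_pos (k : ckind) := if k is Classical true then true else false.
Definition is_neg (k : ckind) := if k is Classical false then true else false.
Definition is_sing (k : ckind) := if k is Singular then true else false.

(* A diagram: a finite set of double points [cr]; at double point x the two
   strands through x are indexed by b : bool, strand b entering x at the
   incoming end (x,b) and leaving at the outgoing end (x,b).  The arcs of the
   diagram between double points are encoded by the bijection [nxt]: the arc
   leaving the outgoing end (x,b) arrives at the incoming end [nxt (x,b)].
   [nfree] is the number of component circles without any double point. *)
Record vsdiagram := VSDiagram {
  cr : finType;
  kind : cr -> ckind;
  nxt : {perm (cr * bool)};
  nfree : nat }.

Section Diagram.
Variable D : vsdiagram.

(* segments of the diagram (arcs between consecutive double points),
   indexed by their starting outgoing end *)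
Definition seg := (cr D * bool)%type.
(* ends at double points: (x, strand, is_outgoing) *)
Definition endpt := (cr D * bool * bool)%type.

(* A state: a choice of resolution at every classical and singular crossing;
   S x = true means disoriented, false means oriented.  Virtual crossings are
   kept; we normalise S x = false there so that states are in bijection with
   choices at the classical and singular crossings. *)
Definition state := {ffun cr D -> bool}.
Definition is_state (S : state) := [forall x, is_virtual (kind x) ==> ~~ S x].
Definition dis (S : state) (x : cr D) := S x && ~~ is_virtual (kind x).

(* How the four ends at a double point are joined in the state S:
   disoriented: in_1 -- in_2 (sink), out_1 -- out_2 (source);
   virtual: in_b -- out_b (crossing kept);
   oriented: in_b -- out_(~b). *)
Definition pairp (S : state) (e : endpt) : endpt :=
  let: (x, b, o) := e in
  if dis S x then (x, ~~ b, o)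
  else if is_virtual (kind x) then (x, b, ~~ o)
  else (x, ~~ b, ~~ o).

Definition seg_of (e : endpt) : seg :=
  let: (x, b, o) := e in if o then (x, b) else ((nxt D)^-1)%g (x, b).

Definition tail (s : seg) : endpt := (s.1, s.2, true).
Definition head (s : seg) : endpt := ((nxt D s).1, (nxt D s).2, false).

Definition adj (S : state) : rel seg := fun s t =>
  (seg_of (pairp S (tail s)) == t) || (seg_of (pairp S (head s)) == t).

Definition ncurves (S : state) : nat := n_comp (adj S) predT + nfree D.

(* weight maps, viewed on segments: constant along an edge of S (across
   virtual crossings and oriented resolutions), and taking different values
   on the two edges at a bivalent vertex (disoriented resolution). *)
Definition weight_map (S : state) (tau : {ffun seg -> bool}) : bool :=
  [forall e : endpt,
    (tau (seg_of e) == tau (seg_of (pairp S e))) == ~~ dis S e.1.1].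

(* tau encodes the sign (-1)^(tau); parity bit: true iff
   prod_v tau(e_v) tau(e_v') = -1 *)
Definition vpar (tau : {ffun seg -> bool}) : bool :=
  \big[addb/false]_(x | is_virtual (kind x))
     (tau (seg_of (x, true, false)) (+) tau (seg_of (x, false, false))).

(* i(S) = -1 iff ipar S = true; computed with any weight map *)
Definition ipar (S : state) : bool :=
  if [pick tau | weight_map S tau] is Some tau then vpar tau else false.

(* well-definedness of the parity as asserted in the paper: weight maps
   exist and i(S) does not depend on the weight map *)
Definition parity_wd : Prop :=
  forall S : state, is_state S ->
    (exists tau, weight_map S tau) /\
    (forall t1 t2, weight_map S t1 -> weight_map S t2 -> vpar t1 = vpar t2).

Definition ncl : nat := #|[pred x : cr D | is_classical (kind x)]|.

Definition aS (S : state) : int :=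
  (#|[pred x : cr D | is_neg (kind x) && ~~ S x]|%:Z
   - #|[pred x : cr D | is_pos (kind x) && ~~ S x]|%:Z)%R.
Definition bS (S : state) : int :=
  (#|[pred x : cr D | is_neg (kind x) && S x]|%:Z
   - #|[pred x : cr D | is_pos (kind x) && S x]|%:Z)%R.
Definition alphaS (S : state) : nat := #|[pred x : cr D | is_sing (kind x) && ~~ S x]|.
Definition betaS (S : state) : nat := #|[pred x : cr D | is_sing (kind x) && S x]|.

Local Open Scope ring_scope.
Variable K : comUnitRingType.
Variables A h : K.

Definition Rbar (S : state) : K :=
  A ^ (2 * aS S + 4 * bS S)
  * (- A ^+ 2 - A ^- 2) ^+ (alphaS S + ncurves S)
  * (- A ^+ 4 - A ^- 4) ^+ betaS S.

Definition Rinv : K :=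
  (-1) ^+ ncl * \sum_(S : state | is_state S) Rbar S * h ^+ (ipar S).
Definition phi : K :=
  (-1) ^+ ncl * \sum_(S : state | is_state S && ipar S) Rbar S.
Definition psi : K :=
  (-1) ^+ ncl * \sum_(S : state | is_state S && ~~ ipar S) Rbar S.

End Diagram.

Section Union.
Variables D1 D2 : vsdiagram.
Definition ucr := (cr D1 + cr D2)%type.

Definition ukind (x : ucr) : ckind :=
  match x with inl y => kind y | inr y => kind y end.

Definition unxt_fun (p : ucr * bool) : ucr * bool :=
  match p with
  | (inl y, b) => let q := nxt D1 (y, b) in (inl q.1, q.2)
  | (inr y, b) => let q := nxt D2 (y, b) in (inr q.1, q.2)
  end.
Definition unxt_inv (p : ucr * bool) : ucr * bool :=
  match p with
  | (inl y, b) => let q := ((nxt D1)^-1)%g (y, b) in (inl q.1, q.2)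
  | (inr y, b) => let q := ((nxt D2)^-1)%g (y, b) in (inr q.1, q.2)
  end.

Lemma unxt_funK : cancel unxt_fun unxt_inv.
Proof.
case=> [[y|y] b] /=.
- by rewrite -surjective_pairing permK.
- by rewrite -surjective_pairing permK.
Qed.

Definition dunion : vsdiagram :=
  @VSDiagram ucr ukind (perm (can_inj unxt_funK)) (nfree D1 + nfree D2).
End Union.

(* Main.v *)
Require Import Defs.
From HB Require Import structures.
From mathcomp Require Import all_boot all_order all_algebra all_fingroup.
From mathcomp Require Import zify ring.
Set Implicit Arguments. Unset Strict Implicit. Unset Printing Implicit Defensive.
Import Order.TTheory GRing.Theory Num.Theory.


Section Gen.
Variable D : vsdiagram.
Implicit Types (S : state D) (s t : seg D) (e : endpt D).

Lemma pairpK S : involutive (pairp S).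
Proof.
case=> [[x b] o]; rewrite /pairp.
case d: (dis S x); case v: (is_virtual (kind x)) => /=; by rewrite ?d ?v ?negbK.
Qed.

Lemma seg_of_tail s : seg_of (tail s) = s.
Proof. by case: s. Qed.

Lemma seg_of_head s : seg_of (Defs.head s) = s.
Proof. by rewrite /seg_of /Defs.head /= -surjective_pairing permK. Qed.

Lemma seg_end e : (tail (seg_of e) == e) || (Defs.head (seg_of e) == e).
Proof.
case: e => [[x b] [|]]; first by rewrite eqxx.
by rewrite /seg_of /Defs.head permKV /= eqxx orbT.
Qed.

Lemma adj_imp S s t : adj S s t -> adj S t s.
Proof.
have H : forall e, adj S (seg_of (pairp S e)) (seg_of e).
  move=> e; set p := pairp S e.
  case/orP: (seg_end p) => /eqP E; rewrite /adj E /p pairpK eqxx ?orbT //.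
by case/orP => /eqP <-; [rewrite -{2}(seg_of_tail s) | rewrite -{2}(seg_of_head s)].
Qed.

Lemma adj_csym S : connect_sym (adj S).
Proof. apply: sym_connect_sym => s t; apply/idP/idP; exact: adj_imp. Qed.
End Gen.


Section Union.
Variables D1 D2 : vsdiagram.
Local Notation D := (dunion D1 D2).

Lemma unxt_invK : cancel (@unxt_inv D1 D2) (@unxt_fun D1 D2).
Proof. by case=> [[y|y] b] /=; rewrite -surjective_pairing permKV. Qed.

Lemma nxtE p : nxt D p = @unxt_fun D1 D2 p.
Proof. by rewrite /= permE. Qed.

Lemma nxtVE p : ((nxt D)^-1)%g p = @unxt_inv D1 D2 p.
Proof. by rewrite -{1}(unxt_invK p) -nxtE permK. Qed.

Definition segL (s : seg D1) : seg D := (inl s.1, s.2).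
Definition segR (s : seg D2) : seg D := (inr s.1, s.2).
Definition epL (e : endpt D1) : endpt D := (inl e.1.1, e.1.2, e.2).
Definition epR (e : endpt D2) : endpt D := (inr e.1.1, e.1.2, e.2).

Definition joinS (S1 : state D1) (S2 : state D2) : state D :=
  [ffun x : ucr D1 D2 => match x with inl y => S1 y | inr y => S2 y end].

Variables (S1 : state D1) (S2 : state D2).
Local Notation S := (joinS S1 S2).

Lemma disL y : dis S (inl y) = dis S1 y.
Proof. by rewrite /dis ffunE. Qed.
Lemma disR y : dis S (inr y) = dis S2 y.
Proof. by rewrite /dis ffunE. Qed.

Lemma pairpL e : pairp S (epL e) = epL (pairp S1 e).
Proof.
case: e => [[y b] o]; rewrite /pairp /epL /= disL.
by case: (dis S1 y); case: (is_virtual (kind y)).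
Qed.
Lemma pairpR e : pairp S (epR e) = epR (pairp S2 e).
Proof.
case: e => [[y b] o]; rewrite /pairp /epR /= disR.
by case: (dis S2 y); case: (is_virtual (kind y)).
Qed.

Lemma seg_ofL e : seg_of (epL e) = segL (seg_of e).
Proof. by case: e => [[y b] [|]]; rewrite /seg_of /= ?nxtVE. Qed.
Lemma seg_ofR e : seg_of (epR e) = segR (seg_of e).
Proof. by case: e => [[y b] [|]]; rewrite /seg_of /= ?nxtVE. Qed.

Lemma tailL s : tail (segL s) = epL (tail s). Proof. by []. Qed.
Lemma tailR s : tail (segR s) = epR (tail s). Proof. by []. Qed.
Lemma headL s : Defs.head (segL s) = epL (Defs.head s).
Proof. by case: s => y b; rewrite /Defs.head nxtE. Qed.
Lemma headR s : Defs.head (segR s) = epR (Defs.head s).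
Proof. by case: s => y b; rewrite /Defs.head nxtE. Qed.

Lemma segL_inj : injective segL.
Proof. by case=> [a b] [c d] [-> ->]. Qed.
Lemma segR_inj : injective segR.
Proof. by case=> [a b] [c d] [-> ->]. Qed.

Lemma adjLL s t : adj S (segL s) (segL t) = adj S1 s t.
Proof. by rewrite /adj tailL headL !pairpL !seg_ofL !(inj_eq segL_inj). Qed.
Lemma adjRR s t : adj S (segR s) (segR t) = adj S2 s t.
Proof. by rewrite /adj tailR headR !pairpR !seg_ofR !(inj_eq segR_inj). Qed.
Lemma adjLR s t : adj S (segL s) (segR t) = false.
Proof. by rewrite /adj tailL headL !pairpL !seg_ofL. Qed.
Lemma adjRL s t : adj S (segR s) (segL t) = false.
Proof. by rewrite /adj tailR headR !pairpR !seg_ofR. Qed.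

Definition isL (u : seg D) := if u.1 is inl _ then true else false.

Lemma segLR (u : seg D) : (exists s, u = segL s) \/ (exists s, u = segR s).
Proof. by case: u => [[y|y] b]; [left; exists (y, b) | right; exists (y, b)]. Qed.

Lemma closedL : closed (adj S) isL.
Proof.
move=> u v; case: (segLR u) => [[s ->]|[s ->]]; case: (segLR v) => [[t ->]|[t ->]];
  by rewrite ?adjLR ?adjRL.
Qed.

Lemma ncurvesJ : ncurves S = ncurves S1 + ncurves S2.
Proof.
have sym := adj_csym S.
rewrite /ncurves /= (n_compC isL) addnACA; congr (_ + _).
rewrite (adjunction_n_comp segL sym (adj_csym S1) closedL).
  congr (_ + _); apply: eq_n_comp_r => s; by rewrite !inE.
apply: strict_adjunction; [exact: adj_csym|exact: closedL|exact: segL_inj| |].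
  apply/subsetP => u; case: (segLR u) => [[s ->]|[s ->]] //= _.
  exact: codom_f.
by move=> s t _; rewrite adjLL.
have clR : closed (adj S) [predC isL].
  by move=> u v /closedL; rewrite !inE => ->.
rewrite (adjunction_n_comp segR sym (adj_csym S2) clR).
  congr (_ + _); apply: eq_n_comp_r => s; by rewrite !inE.
apply: strict_adjunction; [exact: adj_csym|exact: clR|exact: segR_inj| |].
  apply/subsetP => u; case: (segLR u) => [[s ->]|[s ->]] //= _.
  exact: codom_f.
by move=> s t _; rewrite adjRR.
Qed.
End Union.


Section U2.
Variables D1 D2 : vsdiagram.
Local Notation D := (dunion D1 D2).

Definition tjoin (t1 : {ffun seg D1 -> bool}) (t2 : {ffun seg D2 -> bool})
  : {ffun seg D -> bool} :=
  [ffun u : seg D => match u.1 with inl y => t1 (y, u.2) | inr y => t2 (y, u.2) end].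
Definition tL (t : {ffun seg D -> bool}) : {ffun seg D1 -> bool} :=
  [ffun s => t (segL D2 s)].
Definition tR (t : {ffun seg D -> bool}) : {ffun seg D2 -> bool} :=
  [ffun s => t (segR D1 s)].

Lemma tjoinL t1 t2 s : tjoin t1 t2 (segL D2 s) = t1 s.
Proof. by case: s => y b; rewrite ffunE. Qed.
Lemma tjoinR t1 t2 s : tjoin t1 t2 (segR D1 s) = t2 s.
Proof. by case: s => y b; rewrite ffunE. Qed.

Variables (S1 : state D1) (S2 : state D2).
Local Notation S := (joinS S1 S2).

Lemma wmL t : weight_map S t -> weight_map S1 (tL t).
Proof.
move/forallP=> H; apply/forallP=> e; have := H (epL D2 e).
by rewrite pairpL !seg_ofL !ffunE; case: e => [[y b] o]; rewrite /= disL.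
Qed.
Lemma wmR t : weight_map S t -> weight_map S2 (tR t).
Proof.
move/forallP=> H; apply/forallP=> e; have := H (epR D1 e).
by rewrite pairpR !seg_ofR !ffunE; case: e => [[y b] o]; rewrite /= disR.
Qed.

Lemma wmJ t1 t2 : weight_map S1 t1 -> weight_map S2 t2 -> weight_map S (tjoin t1 t2).
Proof.
move=> /forallP H1 /forallP H2; apply/forallP => -[[[y|y] b] o].
  have := H1 (y, b, o); have -> : ((inl y, b), o) = epL D2 (y, b, o) by [].
  by rewrite pairpL !seg_ofL !tjoinL /= disL.
have := H2 (y, b, o); have -> : ((inr y, b), o) = epR D1 (y, b, o) by [].
by rewrite pairpR !seg_ofR !tjoinR /= disR.
Qed.

Lemma vparJ t : vpar t = vpar (tL t) (+) vpar (tR t).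
Proof.
rewrite /vpar big_sumType /=; congr addb; apply: eq_bigr => y _;
  by rewrite !ffunE !nxtVE.
Qed.

Lemma iparE (D0 : vsdiagram) (S0 : state D0) t :
  parity_wd D0 -> is_state S0 -> weight_map S0 t -> ipar S0 = vpar t.
Proof.
move=> /(_ S0) PW st w; have [[t0 w0] U] := PW st.
rewrite /ipar; case: pickP => [t' w'|/(_ t0)]; last by rewrite w0.
exact: U.
Qed.

Lemma iparJ : parity_wd D1 -> parity_wd D2 -> is_state S1 -> is_state S2 ->
  ipar S = ipar S1 (+) ipar S2.
Proof.
move=> P1 P2 st1 st2.
have [[t1 w1] _] := P1 S1 st1; have [[t2 w2] _] := P2 S2 st2.
rewrite /ipar; case: pickP => [t w|/(_ (tjoin t1 t2))]; last by rewrite wmJ.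
rewrite vparJ -(iparE P1 st1 (wmL w)) -(iparE P2 st2 (wmR w)).
by rewrite /ipar.
Qed.

Lemma stateJ : is_state S = is_state S1 && is_state S2.
Proof.
apply/forallP/andP => [H|[/forallP H1 /forallP H2]].
  by split; apply/forallP => y; [have := H (inl y) | have := H (inr y)]; rewrite ffunE.
by case=> y; rewrite ffunE; [apply: H1 | apply: H2].
Qed.

Lemma card_sum (T1 T2 : finType) (P : pred (T1 + T2)) :
  #|[pred x | P x]| = #|[pred y | P (inl y)]| + #|[pred y | P (inr y)]|.
Proof.
rewrite -!sum1_card big_sumType /=; congr (_ + _); apply: eq_bigl => y; by rewrite !inE.
Qed.

Lemma nclJ : ncl D = (ncl D1 + ncl D2)%N.
Proof. by rewrite /ncl card_sum. Qed.

Lemma aSJ : aS S = (aS S1 + aS S2)%R.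
Proof.
rewrite /aS !card_sum.
have E : forall (P : cr D1 -> bool) (Q : cr D2 -> bool),
  #|[pred y | P y && ~~ S (inl y)]| + #|[pred y | Q y && ~~ S (inr y)]| =
  #|[pred y | P y && ~~ S1 y]| + #|[pred y | Q y && ~~ S2 y]|.
  by move=> P Q; congr (_ + _); apply: eq_card => y; rewrite !inE ffunE.
rewrite /= !E !PoszD; lia.
Qed.

Lemma bSJ : bS S = (bS S1 + bS S2)%R.
Proof.
rewrite /bS !card_sum.
have E : forall (P : cr D1 -> bool) (Q : cr D2 -> bool),
  #|[pred y | P y && S (inl y)]| + #|[pred y | Q y && S (inr y)]| =
  #|[pred y | P y && S1 y]| + #|[pred y | Q y && S2 y]|.
  by move=> P Q; congr (_ + _); apply: eq_card => y; rewrite !inE ffunE.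
rewrite /= !E !PoszD; lia.
Qed.

Lemma alphaSJ : alphaS S = (alphaS S1 + alphaS S2)%N.
Proof.
rewrite /alphaS card_sum /=; congr (_ + _); apply: eq_card => y; by rewrite !inE ffunE.
Qed.
Lemma betaSJ : betaS S = (betaS S1 + betaS S2)%N.
Proof.
rewrite /betaS card_sum /=; congr (_ + _); apply: eq_card => y; by rewrite !inE ffunE.
Qed.

Lemma RbarJ (K : comUnitRingType) (A : K) : A \is a GRing.unit ->
  (Rbar A S = Rbar A S1 * Rbar A S2)%R.
Proof.
move=> uA; rewrite /Rbar aSJ bSJ alphaSJ betaSJ ncurvesJ.
have -> : (2 * (aS S1 + aS S2) + 4 * (bS S1 + bS S2) =
   (2 * aS S1 + 4 * bS S1) + (2 * aS S2 + 4 * bS S2))%R by lia.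
rewrite exprzDr // (addnACA (alphaS S1)) (exprD _ (alphaS S1 + ncurves S1)) (exprD _ (betaS S1)).
move: (A ^ _)%R (A ^ _)%R (_ ^+ (alphaS S1 + _))%R (_ ^+ (alphaS S2 + _))%R (_ ^+ betaS S1)%R (_ ^+ betaS S2)%R.
move=> a1 a2 b1 b2 c1 c2.
ring.
Qed.
End U2.

Local Open Scope ring_scope.

Lemma Rinv_split (K : comUnitRingType) (A h : K) (D0 : vsdiagram) :
  Rinv D0 A h = phi D0 A * h + psi D0 A.
Proof.
rewrite /Rinv /phi /psi (bigID (fun S => ipar S)) /= mulrDr -mulrA.
congr (_ * _ + _ * _).
  by rewrite big_distrl; apply: eq_bigr => S /andP[_ ->]; rewrite expr1.
by apply: eq_bigr => S /andP[_ /negbTE ->]; rewrite expr0 mulr1.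
Qed.

Lemma prod_sums (K : comUnitRingType) (T1 T2 : finType) (P1 : pred T1) (P2 : pred T2)
  (F : T1 -> K) (G : T2 -> K) :
  (\sum_(i | P1 i) F i) * (\sum_(j | P2 j) G j) =
  \sum_(p | P1 p.1 && P2 p.2) F p.1 * G p.2.
Proof.
rewrite big_distrl /=; under eq_bigr do rewrite big_distrr; exact: pair_big.
Qed.

Lemma alg (K : comUnitRingType) (s1 s2 a b c d : K) :
  s1 * s2 * (a * b + c * d) = s1 * a * (s2 * b) + s1 * c * (s2 * d).
Proof. ring. Qed.

Section Final.
Variables D1 D2 : vsdiagram.
Local Notation D := (dunion D1 D2).

Definition splitS (S : state D) : state D1 * state D2 :=
  ([ffun y => S (inl y)], [ffun y => S (inr y)]).

Lemma sum_join (K : comUnitRingType) (P : pred (state D)) (F : state D -> K) :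
  \sum_(S | P S) F S = \sum_(p | P (joinS p.1 p.2)) F (joinS p.1 p.2).
Proof.
apply: (reindex (fun p : state D1 * state D2 => joinS p.1 p.2)).
apply: onW_bij; exists splitS.
  by case=> S1 S2; congr pair; apply/ffunP => y; rewrite !ffunE.
by move=> S; apply/ffunP => -[y|y]; rewrite !ffunE.
Qed.

Variables (K : comUnitRingType) (A : K).
Hypotheses (uA : A \is a GRing.unit) (P1 : parity_wd D1) (P2 : parity_wd D2).

Lemma condJ (c : bool -> bool) (T1 : state D1) (T2 : state D2) :
  is_state (joinS T1 T2) && c (ipar (joinS T1 T2)) =
  (is_state T1 && is_state T2) && c (ipar T1 (+) ipar T2).
Proof.
rewrite stateJ; case s1: (is_state T1); case s2: (is_state T2) => //.
by rewrite (iparJ P1 P2).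
Qed.

Lemma sum_cond (c : bool -> bool) :
  \sum_(S : state D | is_state S && c (ipar S)) Rbar A S =
  \sum_(p : state D1 * state D2 | (is_state p.1 && ipar p.1) && (is_state p.2 && c (~~ ipar p.2)))
     Rbar A p.1 * Rbar A p.2 +
  \sum_(p : state D1 * state D2 | (is_state p.1 && ~~ ipar p.1) && (is_state p.2 && c (ipar p.2)))
     Rbar A p.1 * Rbar A p.2.
Proof.
rewrite sum_join (bigID (fun p => ipar p.1)) /=.
congr (_ + _); (apply: eq_big => [[T1 T2]|p _]; last exact: RbarJ); rewrite condJ /=;
  case: (is_state T1); case: (is_state T2); case: (ipar T1); case: (ipar T2) => //=;
  by rewrite ?andbT ?andbF.
Qed.

Theorem main (h : K) : let D := dunion D1 D2 in
  Rinv D A h = phi D A * h + psi D A /\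
  phi D A = phi D1 A * psi D2 A + psi D1 A * phi D2 A /\
  psi D A = phi D1 A * phi D2 A + psi D1 A * psi D2 A.
Proof.
move=> D0; split; first exact: Rinv_split.
rewrite /phi /psi nclJ exprD.
rewrite (sum_cond id) (sum_cond negb).
split.
  rewrite -(prod_sums (fun S => is_state S && ipar S) (fun S => is_state S && ~~ ipar S) (Rbar A) (Rbar A)).
  rewrite -(prod_sums (fun S => is_state S && ~~ ipar S) (fun S => is_state S && ipar S) (Rbar A) (Rbar A)).
  exact: alg.
under eq_bigl => p do rewrite negbK.
rewrite -(prod_sums (fun S => is_state S && ipar S) (fun S => is_state S && ipar S) (Rbar A) (Rbar A)).
rewrite -(prod_sums (fun S => is_state S && ~~ ipar S) (fun S => is_state S && ~~ ipar S) (Rbar A) (Rbar A)).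
exact: alg.
Qed.
End Final.


Unset Implicit Arguments.

Theorem lemma4p4 (K : comUnitRingType) (A h : K) (D1 D2 : vsdiagram) :
  A \is a GRing.unit -> parity_wd D1 -> parity_wd D2 ->
  let D := dunion D1 D2 in
  Rinv D A h = phi D A * h + psi D A /\
  phi D A = phi D1 A * psi D2 A + psi D1 A * phi D2 A /\
  psi D A = phi D1 A * phi D2 A + psi D1 A * psi D2 A.
Proof.
move=> uA P1 P2; exact: (@main D1 D2 K A uA P1 P2 h).
Qed.
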